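(* Let $\mathcal F_K^{\mathrm d}$ be the set of $F\in\mathcal F_K$ whose columns are mutually different, and let $\mathcal Q_K^{\mathrm{ua}}$ be the set of $Q\in\mathcal Q_K$ such that every column of $Q$ equals $e_k$ for some $k\in\{1,\dots,K\}$, and for every $k$ there is a column $i$ with $Q_{\star i}=e_k$. Then $\mathcal M'''=\bigcup_{K=1}^\infty\mathcal F_K^{\mathrm d}\times\mathcal Q_K^{\mathrm{ua}}=\bigcup_{K=1}^N\mathcal F_K^{\mathrm d}\times\mathcal Q_K^{\mathrm{ua}}$ and $\mathcal M'''$ is identifiable.
   Context: Fix positive integers $M$ and $N$. For a positive integer $K$, $\mathcal F_K$ is the set of real $M\times K$ matrices with all entries in $[0,1]$, and $\mathcal Q_K$ is the set of real $K\times N$ matrices with entries in $[0,1]$ each of whose columns sums to $1$. $e_k$ is the $k$-th standard basis vector of $\mathbb R^K$ and $A_{\star j}$ the $j$-th column of $A$. $(F^1,Q^1)\sim(F^2,Q^2)$ means $F^1,F^2$ have the same number $K$ of columns and there is a permutation $\pi$ of $\{1,\dots,K\}$ with $F^2_{sk}=F^1_{s\pi(k)}$ and $Q^2_{ki}=Q^1_{\pi(k)i}$ for all $s,k,i$. A set $\mathcal M$ of pairs is identifiable if for all $(F^1,Q^1),(F^2,Q^2)\in\mathcal M$, $F^1Q^1=F^2Q^2$ implies $(F^1,Q^1)\sim(F^2,Q^2)$. *)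

(* Defs.v *)
From HB Require Import structures.
From mathcomp Require Import all_boot all_order all_algebra.
From mathcomp Require Import reals.
Set Implicit Arguments. Unset Strict Implicit. Unset Printing Implicit Defensive.
Import Order.TTheory GRing.Theory Num.Theory.
Local Open Scope ring_scope.

Definition stdbasis (R : realType) (K : nat) (k : 'I_K) : 'cV[R]_K :=
  delta_mx k 0.

Definition inF (R : realType) (M K : nat) (F : 'M[R]_(M, K)) : Prop :=
  forall s k, 0 <= F s k <= 1.

Definition inQ (R : realType) (K N : nat) (Q : 'M[R]_(K, N)) : Prop :=
  (forall k i, 0 <= Q k i <= 1) /\ (forall i, \sum_(k < K) Q k i = 1).

Definition inFd (R : realType) (M K : nat) (F : 'M[R]_(M, K)) : Prop :=
  inF F /\ (forall k1 k2 : 'I_K, col k1 F = col k2 F -> k1 = k2).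

Definition inQua (R : realType) (K N : nat) (Q : 'M[R]_(K, N)) : Prop :=
  inQ Q /\ (forall i : 'I_N, exists k : 'I_K, col i Q = stdbasis R k)
        /\ (forall k : 'I_K, exists i : 'I_N, col i Q = stdbasis R k).

Definition pairT (R : realType) (M N : nat) : Type :=
  {K : nat & ('M[R]_(M, K) * 'M[R]_(K, N))%type}.

Definition pK (R : realType) (M N : nat) (p : pairT R M N) : nat := projT1 p.
Definition pF (R : realType) (M N : nat) (p : pairT R M N) : 'M[R]_(M, pK p) :=
  (projT2 p).1.
Definition pQ (R : realType) (M N : nat) (p : pairT R M N) : 'M[R]_(pK p, N) :=
  (projT2 p).2.

Definition pair_equiv (R : realType) (M N : nat) (p1 p2 : pairT R M N) : Prop :=
  pK p1 = pK p2 /\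
  exists pi : 'I_(pK p2) -> 'I_(pK p1), bijective pi /\
    (forall s k, pF p2 s k = pF p1 s (pi k)) /\
    (forall k i, pQ p2 k i = pQ p1 (pi k) i).

Definition identifiable (R : realType) (M N : nat) (S : pairT R M N -> Prop) : Prop :=
  forall p1 p2, S p1 -> S p2 -> pF p1 *m pQ p1 = pF p2 *m pQ p2 -> pair_equiv p1 p2.

Definition Mppp (R : realType) (M N : nat) (p : pairT R M N) : Prop :=
  (1 <= pK p)%N /\ inFd (pF p) /\ inQua (pQ p).

(* Main.v *)
Require Import Defs.
From HB Require Import structures.
From mathcomp Require Import all_boot all_order all_algebra.
From mathcomp Require Import reals.
Local Open Scope ring_scope.

Import GRing.Theory.
Set Implicit Arguments.
Section H.
Variable R : realType.

Lemma Qentry (K N : nat) (Q : 'M[R]_(K,N)) i k0 :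
  col i Q = stdbasis R k0 -> forall k, Q k i = (k == k0)%:R.
Proof.
move=> H k; have := congr1 (fun A : 'cV[R]_K => A k 0) H.
by rewrite /stdbasis !mxE /= eqxx andbT.
Qed.

Lemma mulua (M K N : nat) (F : 'M[R]_(M,K)) (Q : 'M[R]_(K,N)) sg :
  (forall i, col i Q = stdbasis R (sg i)) -> forall s i, (F *m Q) s i = F s (sg i).
Proof.
move=> H s i; rewrite mxE (bigD1 (sg i)) //= (Qentry (H i)) eqxx mulr1.
rewrite big1 ?addr0 // => k hk; by rewrite (Qentry (H i)) (negbTE hk) mulr0.
Qed.

Lemma stdinj (K : nat) (k1 k2 : 'I_K) : stdbasis R k1 = stdbasis R k2 -> k1 = k2.
Proof.
move=> H; have := congr1 (fun A : 'cV[R]_K => A k1 0) H.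
rewrite /stdbasis !mxE /= !eqxx /=; rewrite andbT; case: eqP => // _ /eqP; by rewrite oner_eq0.
Qed.

Lemma colF_eq (M K K' : nat) (F : 'M[R]_(M,K)) (G : 'M[R]_(M,K')) k k' :
  (forall s, F s k = G s k') -> col k F = col k' G.
Proof. by move=> H; apply/matrixP => s j; rewrite !mxE. Qed.

End H.
Unset Implicit Arguments.

Theorem mainTheorem7 (R : realType) (M N : nat) (hM : (0 < M)%N) (hN : (0 < N)%N) :
  (forall p : pairT R M N,
     Mppp p <-> ((1 <= pK p <= N)%N /\ inFd (pF p) /\ inQua (pQ p)))
  /\ identifiable (@Mppp R M N).
Proof.
split.
  move=> [K [F Q]]; rewrite /Mppp /pK /pF /pQ /=; split; last first.
    by case=> /andP[-> _].
  move=> [h1 [hF hQ]]; split=> //; rewrite h1 /=.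
  case: hQ => _ [_ hk].
  have [tau Ht] := fin_all_exists hk.
  have : injective tau.
    by move=> a b Hab; apply: (@stdinj R); rewrite -Ht -Ht Hab.
  by move/leq_card; rewrite !card_ord.
move=> [K1 [F1 Q1]] [K2 [F2 Q2]]; rewrite /Mppp /pK /pF /pQ /pair_equiv /=.
move=> [_ [[_ hF1] [_ [hs1 ht1]]]] [_ [[_ hF2] [_ [hs2 ht2]]]] Heq.
have [s1 Hs1] := fin_all_exists hs1.
have [s2 Hs2] := fin_all_exists hs2.
have [t1 Ht1] := fin_all_exists ht1.
have [t2 Ht2] := fin_all_exists ht2.
have E s i : F1 s (s1 i) = F2 s (s2 i).
  by rewrite -(@mulua _ _ _ _ F1 Q1 s1 Hs1) -(@mulua _ _ _ _ F2 Q2 s2 Hs2) Heq.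
pose pi k := s1 (t2 k).
pose pi' k := s2 (t1 k).
have Epi s k : F2 s k = F1 s (pi k).
  have e : s2 (t2 k) = k by apply: (@stdinj R K2); rewrite -(Hs2 (t2 k)) Ht2.
  by rewrite /pi E e.
have Epi' s k : F1 s k = F2 s (pi' k).
  have e : s1 (t1 k) = k by apply: (@stdinj R K1); rewrite -(Hs1 (t1 k)) Ht1.
  by rewrite /pi' -E e.
have c1 k : pi' (pi k) = k.
  by apply: hF2; apply: colF_eq => s; rewrite -Epi' -Epi.
have c2 k : pi (pi' k) = k.
  by apply: hF1; apply: colF_eq => s; rewrite -Epi -Epi'.
have inj1 : injective pi by apply: can_inj c1.
have inj2 : injective pi' by apply: can_inj c2.
split.
  apply/eqP; rewrite eqn_leq.
  by move: (leq_card _ inj1) (leq_card _ inj2); rewrite !card_ord => -> ->.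
exists pi; split; first by exists pi'.
split=> // k i.
have si : s1 i = pi (s2 i).
  by apply: hF1; apply: colF_eq => s; rewrite E Epi.
rewrite (Qentry (Hs2 i)) (Qentry (Hs1 i)) si.
by rewrite (inj_eq inj1).
Qed.
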